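(* Let $R$ be a commutative ring, $M$ an $R$-module, $y_1,\ldots,y_r\in R$, and let $i>0$ be an integer. Assume that for all $A\subseteq\{1,\ldots,r\}$ and all $s$ with $\max A<s\le r$ one has $y_sH_i(y_A;M)=0$. Then for all $A\subseteq\{1,\ldots,r\}$ the canonical map $$\partial\colon H_{i+1}(y_A;M)\to\bigoplus_{j\in A}H_i(y_{A_j};M),\quad \partial([z])=(\partial_j([z]))_{j\in A},$$ is injective.
   Context: For $A\subseteq\{1,\ldots,r\}$, $y_A=\{y_j:j\in A\}$ and for $j\in A$, $A_j=A\setminus\{j\}$; $H_i(y_A;M)$ is the Koszul homology of $M$ with respect to $y_A$, the Koszul complex having exterior basis $e_j$, $j\in A$. The map $\partial_j\colon H_{i+1}(y_A;M)\to H_i(y_{A_j};M)$ is defined as follows: a cycle $z\in Z_{i+1}(y_A;M)$ can be uniquely written $z=z_0+z_1\wedge e_j$ with $z_0\in K_{i+1}(y_{A_j};M)$ and $z_1\in Z_i(y_{A_j};M)$, and $\partial_j([z])=[z_1]$ (it is the connecting map in the long exact sequence $\cdots\to H_{i+1}(y_{A_j};M)\to H_{i+1}(y_A;M)\to H_i(y_{A_j};M)\xrightarrow{y_j}\cdots$). *)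

(* Defs.v *)
(* Koszul complex of M w.r.t. y_A, A ⊆ {0,..,r-1}, realised
   concretely: a chain is a function c : {set 'I_r} -> M, c B being the
   coefficient of e_B = e_{b_1} ∧ ... ∧ e_{b_k} (b_1 < ... < b_k). *)
From HB Require Import structures.
From mathcomp Require Import all_boot all_order all_algebra.
Set Implicit Arguments. Unset Strict Implicit. Unset Printing Implicit Defensive.
Import GRing.Theory.
Local Open Scope ring_scope.

Section Koszul.
Variables (R : comPzRingType) (M : lmodType R) (r : nat) (y : 'I_r -> R).

Definition kchain (A : {set 'I_r}) (i : nat) (c : {set 'I_r} -> M) : Prop :=
  forall B : {set 'I_r}, ~~ ((B \subset A) && (#|B| == i)) -> c B = 0.

(* Koszul differential:
   d(e_{b_1}∧..∧e_{b_k}) = sum_l (-1)^(l-1) y_{b_l} e_{B \ b_l} *)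
Definition kdiff (c : {set 'I_r} -> M) : {set 'I_r} -> M :=
  fun C => \sum_(k : 'I_r | k \notin C)
             ((-1) ^+ #|[set b in C | (b < k)%N]| * y k) *: c (k |: C).

Definition kcycle (A : {set 'I_r}) (i : nat) (c : {set 'I_r} -> M) : Prop :=
  kchain A i c /\ forall C, kdiff c C = 0.

Definition kboundary (A : {set 'I_r}) (i : nat) (c : {set 'I_r} -> M) : Prop :=
  exists w, kchain A i.+1 w /\ forall C, c C = kdiff w C.

(* For z = z_0 + z_1 ∧ e_j (z_0 not involving e_j), this is z_1:
   e_C ∧ e_j = (-1)^#{c in C | c > j} e_{C ∪ {j}}. *)
Definition kpart (j : 'I_r) (z : {set 'I_r} -> M) : {set 'I_r} -> M :=
  fun C => if j \in C then 0
           else (-1) ^+ #|[set c in C | (j < c)%N]| *: z (j |: C).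

End Koszul.

(* Main.v *)
Require Import Defs.
From mathcomp Require Import all_boot all_order all_algebra.
From mathcomp Require Import ring.
Set Implicit Arguments. Unset Strict Implicit. Unset Printing Implicit Defensive.
Import GRing.Theory.
Local Open Scope ring_scope.

Lemma card_setU1_pred (T : finType) (a : T) (C : {set T}) (P : pred T) :
  a \notin C -> #|[set x in a |: C | P x]| = (P a + #|[set x in C | P x]|)%N.
Proof.
move=> aC.
case Pa: (P a).
  have -> : [set x in a |: C | P x] = a |: [set x in C | P x].
    by apply/setP => x; rewrite !inE; case: eqP => // ->; rewrite Pa.
  by rewrite cardsU1 inE (negbTE aC).
have -> : [set x in a |: C | P x] = [set x in C | P x].
  by apply/setP => x; rewrite !inE; case: eqP => // ->; rewrite Pa (negbTE aC).
by [].
Qed.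

Lemma sum_antisym (V : zmodType) n (H : 'I_n -> 'I_n -> V) :
  (forall k, H k k = 0) -> (forall k l, H k l = - H l k) ->
  \sum_k \sum_l H k l = 0.
Proof.
move=> H0 HN.
pose T := \sum_(k : 'I_n) \sum_(l : 'I_n) (if (k < l)%N then H k l else 0).
transitivity (T + \sum_(k : 'I_n) \sum_(l : 'I_n) (if (l < k)%N then H k l else 0)).
  rewrite /T -big_split /=; apply: eq_bigr => k _.
  rewrite -big_split /=; apply: eq_bigr => l _.
  case: ltngtP => [_|_|e]; rewrite ?addr0 ?add0r //.
  by rewrite (ord_inj e) H0.
rewrite exchange_big /=.
have -> : \sum_(l : 'I_n) \sum_(k : 'I_n) (if (l < k)%N then H k l else 0) = - T.
  rewrite /T -sumrN; apply: eq_bigr => l _; rewrite -sumrN; apply: eq_bigr => k _.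
  by case: ifP => _; rewrite ?oppr0 // HN.
by rewrite addrN.
Qed.

Lemma cardsU1S (T : finType) (a : T) (A : {set T}) : a \notin A -> #|a |: A| = #|A|.+1.
Proof. by rewrite cardsU1 => ->. Qed.

Section S.
Variables (R : comPzRingType) (M : lmodType R) (r : nat) (y : 'I_r -> R).
Implicit Types (f g c : {set 'I_r} -> M) (A B C D : {set 'I_r}) (i : nat) (j k l : 'I_r).

Lemma kdiff_ext f g C : (forall D, f D = g D) -> kdiff y f C = kdiff y g C.
Proof. by move=> e; apply: eq_bigr => k _; rewrite e. Qed.

Lemma kdiffD f g C : kdiff y (fun D => f D + g D) C = kdiff y f C + kdiff y g C.
Proof. by rewrite /kdiff -big_split; apply: eq_bigr => k _; rewrite scalerDr. Qed.

Lemma kdiffB f g C : kdiff y (fun D => f D - g D) C = kdiff y f C - kdiff y g C.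
Proof. by rewrite /kdiff -sumrB; apply: eq_bigr => k _; rewrite scalerBr. Qed.

Lemma kdiffZ a f C : kdiff y (fun D => a *: f D) C = a *: kdiff y f C.
Proof. by rewrite /kdiff scaler_sumr; apply: eq_bigr => k _; rewrite !scalerA mulrC. Qed.

Lemma kdiff0 C : kdiff y (fun _ => (0 : M)) C = 0.
Proof. by rewrite /kdiff big1 // => k _; rewrite scaler0. Qed.

Lemma kpartB j f g C : kpart j (fun D => f D - g D) C = kpart j f C - kpart j g C.
Proof. by rewrite /kpart; case: ifP => _; rewrite ?subr0 // scalerBr. Qed.

Lemma kchain_sub A B i c : A \subset B -> kchain A i c -> kchain B i c.
Proof.
move=> sAB h D hD; apply: h; move: hD; apply: contra => /andP[sD ->].
by rewrite (subset_trans sD sAB).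
Qed.

Lemma kchainD A i f g : kchain A i f -> kchain A i g -> kchain A i (fun D => f D + g D).
Proof. by move=> hf hg D hD; rewrite hf // hg // addr0. Qed.

Lemma kchainB A i f g : kchain A i f -> kchain A i g -> kchain A i (fun D => f D - g D).
Proof. by move=> hf hg D hD; rewrite hf // hg // subr0. Qed.

Lemma kchainZ A i a f : kchain A i f -> kchain A i (fun D => a *: f D).
Proof. by move=> hf D hD; rewrite hf // scaler0. Qed.

Lemma kchain_diff A i c : kchain A i.+1 c -> kchain A i (kdiff y c).
Proof.
move=> h D hD; rewrite /kdiff big1 // => k kD; rewrite h ?scaler0 //.
move: hD; apply: contra => /andP[s /eqP cd].
rewrite subUset in s; case/andP: s => _ ->.
by rewrite cardsU1S // in cd; move/succn_inj: cd => ->; rewrite eqxx.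
Qed.

Lemma kpart_chain A i j c : kchain A i.+1 c -> kchain (A :\ j) i (kpart j c).
Proof.
move=> h D hD; rewrite /kpart; case: ifP => jD //.
rewrite h ?scaler0 //; move: hD; apply: contra => /andP[s /eqP cd].
rewrite cardsU1S ?jD // in cd; move/succn_inj: cd => ->; rewrite eqxx andbT.
apply/subsetP => x xD; rewrite !inE.
have := subsetP s x; rewrite !inE xD orbT => /(_ isT) ->.
by rewrite andbT; apply: contraNneq (negbT jD) => <-.
Qed.

Lemma kpart_diff j c C : kpart j (kdiff y c) C = kdiff y (kpart j c) C.
Proof.
rewrite /kpart /kdiff; case: ifP => jC.
  by rewrite big1 // => l _; rewrite inE jC orbT scaler0.
rewrite scaler_sumr (big_mkcond (fun l => l \notin j |: C)) (big_mkcond (fun l => l \notin C)) /=.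
apply: eq_bigr => l _.
rewrite !inE; case: (eqVneq l j) => [->|lj] /=.
  by case: ifP => _; rewrite ?scaler0.
case: ifP => lC //=.
rewrite jC /= !scalerA setUCA.
rewrite (card_setU1_pred (fun b : 'I_r => (b < l)%N)) ?jC //.
rewrite (card_setU1_pred (fun b : 'I_r => (j < b)%N)) ?lC //=.
congr (_ *: _); rewrite !exprD; ring.
Qed.

Lemma dd0 c C : kdiff y (kdiff y c) C = 0.
Proof.
pose H k l := if (k \notin C) && (l \notin k |: C) then
   (((-1) ^+ #|[set b in C | (b < k)%N]| * y k) * ((-1) ^+ #|[set b in k |: C | (b < l)%N]| * y l))
     *: c (l |: (k |: C)) else 0.
transitivity (\sum_k \sum_l H k l).
  rewrite /kdiff big_mkcond /=; apply: eq_bigr => k _; rewrite /H.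
  case: ifP => kC /=.
    rewrite scaler_sumr big_mkcond /=; apply: eq_bigr => l _.
    by case: ifP => _; rewrite ?scaler0 // scalerA.
  by rewrite big1.
apply: sum_antisym => [k|k l]; first by rewrite /H !inE ?eqxx /= ?andbF.
rewrite /H !inE.
case: (eqVneq k l) => [->|kl]; first by rewrite /= ?andbF oppr0.
rewrite /=.
case kC: (k \in C); case lC: (l \in C) => /=; rewrite ?oppr0 //.
rewrite setUCA -scaleNr; congr (_ *: _).
rewrite (card_setU1_pred (fun b : 'I_r => (b < l)%N)) ?kC //.
rewrite (card_setU1_pred (fun b : 'I_r => (b < k)%N)) ?lC //=.
rewrite !exprD.
case: (ltngtP k l) => [_|_|e]; last by move: kl; rewrite (ord_inj e) eqxx.
  rewrite expr1 expr0; ring.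
rewrite expr1 expr0; ring.
Qed.

Definition kext j f : {set 'I_r} -> M := fun D =>
  if j \in D then (-1) ^+ #|[set c in D :\ j | (j < c)%N]| *: f (D :\ j) else 0.

Lemma sign_sq n : ((-1) ^+ n * (-1) ^+ n : R) = 1.
Proof. by rewrite -exprD addnn -mul2n exprM sqrrN expr1n expr1n. Qed.

Lemma kext_chain A i j f : j \in A -> kchain (A :\ j) i f -> kchain A i.+1 (kext j f).
Proof.
move=> jA h D hD; rewrite /kext; case: ifP => jD //.
rewrite h ?scaler0 //; move: hD; apply: contra => /andP[s /eqP cd].
rewrite (cardsD1 j D) jD cd eqxx andbT.
apply/subsetP => x xD; case: (eqVneq x j) => [->//|xj].
have : x \in D :\ j by rewrite !inE xj xD.
by move/(subsetP s); rewrite !inE => /andP[].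
Qed.

Lemma kpart_kext j f C : (forall D, j \in D -> f D = 0) -> kpart j (kext j f) C = f C.
Proof.
move=> h; rewrite /kpart /kext; case: ifP => jC; first by rewrite h.
rewrite setU11 setU1K ?jC // scalerA sign_sq scale1r //.
Qed.

Lemma kpart_recover j f D : j \in D ->
  f D = (-1) ^+ #|[set c in D :\ j | (j < c)%N]| *: kpart j f (D :\ j).
Proof.
move=> jD; rewrite /kpart !inE eqxx /= setD1K // scalerA sign_sq scale1r //.
Qed.

Lemma iota_ker i
    (hyp : forall (A : {set 'I_r}) (s : 'I_r),
        (forall a, a \in A -> (a < s)%N) ->
        forall z : {set 'I_r} -> M, kcycle y A i z -> kboundary y A i (fun C => y s *: z C))
    B j c v :
  (forall b, b \in B -> (b < j)%N) -> kchain B i c -> kchain (j |: B) i.+1 v ->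
  (forall C, c C = kdiff y v C) -> kboundary y B i c.
Proof.
move=> hB hc hv hcv.
have jB : j \notin B by apply/negP => /hB; rewrite ltnn.
pose v1 := kpart j v.
have v1ch : kchain B i v1.
  apply: (kchain_sub _ (kpart_chain (j := j) hv)).
  by apply/subsetP => x; rewrite !inE => /andP[/negbTE ->].
have v1cy : forall C, kdiff y v1 C = 0.
  move=> C; rewrite -kpart_diff /kpart; case: ifP => jC //.
  rewrite -hcv hc ?scaler0 //.
  by rewrite subUset sub1set (negbTE jB).
have [w [wch hw]] := hyp B j hB v1 (conj v1ch v1cy).
pose v0 := fun C => if j \in C then 0 else v C.
have v0ch : kchain B i.+1 v0.
  move=> C hC; rewrite /v0; case: ifP => jC //.
  apply: hv; move: hC; apply: contra => /andP[s ->]; rewrite andbT.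
  apply/subsetP => x xC; have := subsetP s x xC; rewrite !inE.
  by case/orP => // /eqP xj; move: xC; rewrite xj jC.
exists (fun C => v0 C + (-1) ^+ i *: w C); split.
  by apply: kchainD => //; apply: kchainZ.
move=> C; rewrite kdiffD kdiffZ -hw.
case: (boolP (j \in C)) => jC.
  rewrite hc; last by rewrite negb_and; apply/orP; left; apply/negP => /subsetP /(_ j jC); rewrite (negbTE jB).
  rewrite /kdiff big1; last by move=> k _; rewrite /v0 /= !inE jC orbT scaler0.
  by rewrite /v1 /kpart jC scaler0 scaler0 addr0.
rewrite hcv.
rewrite /kdiff (bigD1 j) //= (bigD1 j jC) /= {1}/v0 setU11 scaler0 add0r addrC.
congr (_ + _).
  apply: eq_bigr => k /andP[kC kj]; rewrite /v0 !inE eq_sym (negbTE kj) (negbTE jC) //.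
rewrite /v1 /kpart (negbTE jC).
case: (boolP ((j |: C \subset j |: B) && (#|j |: C| == i.+1))) => [/andP[s /eqP cd]|H];
  last by rewrite (hv _ H) !scaler0.
have CB : C \subset B.
  apply/subsetP => x xC; have := subsetP s x; rewrite !inE xC orbT => /(_ isT).
  by case/orP => // /eqP xj; move: xC; rewrite xj (negbTE jC).
have cC : #|C| = i by rewrite cardsU1S // in cd; move/succn_inj: cd.
have -> : [set b in C | (b < j)%N] = C.
  by apply/setP => b; rewrite inE; case bC: (b \in C) => //=; apply: hB; apply: (subsetP CB).
have -> : [set c in C | (j < c)%N] = set0.
  apply/setP => b; rewrite !inE; case bC: (b \in C) => //=.
  by rewrite ltnNge ltnW // hB // (subsetP CB).
by rewrite cards0 expr0 scale1r cC scalerA.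
Qed.

End S.

Theorem lemma2p1 (R : comPzRingType) (M : lmodType R) (r : nat) (y : 'I_r -> R)
    (i : nat) (hi : (0 < i)%N)
    (hyp : forall (A : {set 'I_r}) (s : 'I_r),
        (forall a, a \in A -> (a < s)%N) ->
        forall z : {set 'I_r} -> M, kcycle y A i z -> kboundary y A i (fun C => y s *: z C)) :
  forall (A : {set 'I_r}) (z : {set 'I_r} -> M),
    kcycle y A i.+1 z ->
    (forall j, j \in A -> kboundary y (A :\ j) i (kpart j z)) ->
    kboundary y A i.+1 z.
Proof.
suff main : forall n (A : {set 'I_r}) (z : {set 'I_r} -> M),
    (forall a, a \in A -> (a < n)%N) -> kcycle y A i.+1 z ->
    (forall j, j \in A -> kboundary y (A :\ j) i (kpart j z)) -> kboundary y A i.+1 z.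
  by move=> A z; apply: (main r) => a _; exact: ltn_ord.
elim=> [|n IH] A z hA [hzc hzd] hpart.
  exists (fun _ => 0); split; first by [].
  move=> C; rewrite kdiff0; apply: hzc; apply/negP => /andP[s /eqP cd].
  have : (0 < #|C|)%N by rewrite cd.
  by rewrite card_gt0 => /set0Pn [x xC]; have := hA x (subsetP s x xC).
case: (pickP (fun a => (a \in A) && (val a == n))) => [j /andP[jA /eqP jn] | none]; last first.
  apply: IH => // a aA; have := hA a aA; rewrite ltnS leq_eqVlt.
  by have := none a; rewrite aA /= => ->.
set A' := A :\ j.
have hA' : forall a, a \in A' -> (a < n)%N.
  move=> a; rewrite !inE => /andP[aj aA]; have := hA a aA; rewrite ltnS leq_eqVlt -jn.
  by case/orP => // /eqP/ord_inj e; rewrite e eqxx in aj.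
have [w1 [w1ch hw1]] := hpart j jA.
pose u := kext j w1.
have uch : kchain A i.+2 u := kext_chain jA w1ch.
have w1j : forall D : {set 'I_r}, j \in D -> w1 D = 0.
  move=> D jD; apply: w1ch; rewrite negb_and; apply/orP; left.
  by apply/negP => /subsetP /(_ j jD); rewrite !inE eqxx.
pose z' := fun C => z C - kdiff y u C.
have kz' : forall C, kpart j z' C = 0.
  move=> C; rewrite kpartB hw1 kpart_diff.
  rewrite (@kdiff_ext _ _ _ y (kpart j u) w1) ?subrr // => D.
  exact: kpart_kext.
have z'ch : kchain A' i.+1 z'.
  move=> D hD; case: (boolP ((D \subset A) && (#|D| == i.+1))) => H.
    have jD : j \in D.
      apply: contraT => jD; move: hD; case/andP: H => s ->; rewrite andbT => /negP h; exfalso; apply: h.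
      apply/subsetP => x xD; rewrite !inE (subsetP s x xD) andbT.
      by apply/negP => /eqP xj; rewrite -xj xD in jD.
    by rewrite (kpart_recover z' jD) kz' scaler0.
  by rewrite /z' hzc // (kchain_diff y uch H) subrr.
have z'cy : forall C, kdiff y z' C = 0 by move=> C; rewrite kdiffB hzd dd0 subrr.
have [w' [w'ch hw']] : kboundary y A' i.+1 z'.
  apply: IH => // k kA'.
  have kA : k \in A by move: kA'; rewrite !inE => /andP[].
  have [vk [vkch hvk]] := hpart k kA.
  apply: (iota_ker hyp (j := j) (v := fun C => vk C - kpart k u C)).
  - move=> b; rewrite !inE => /and3P[bk bj bA]; have := hA b bA.
    rewrite ltnS leq_eqVlt -jn; case/orP => // /eqP/ord_inj e.
    by rewrite e eqxx in bj.
  - exact: kpart_chain.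
  - apply: (kchain_sub _ (kchainB vkch (kpart_chain (j := k) uch))).
    by apply/subsetP => x; rewrite !inE => /andP[-> ->]; case: (x == j).
  - by move=> C; rewrite kpartB hvk kpart_diff kdiffB.
exists (fun C => w' C + u C); split.
  by apply: kchainD => //; apply: (kchain_sub _ w'ch); exact: subD1set.
by move=> C; rewrite kdiffD -hw' /z' subrK.
Qed.
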